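(* Let $D$ be a square-free integer, $p$ an odd prime, $k,\ell$ positive integers and $c_D$ a positive integer with $\gcd(c_D k, p) = 1$. Let $N = c_D k p^{\ell} - 1$ be an odd integer with Jacobi symbol $\left(\frac{D}{N}\right) = -1$, and let $w \in \mathcal{G}_N(D)$. Suppose there exists an integer $j$ with $1 \le j \le \ell$ such that: (i) $\Phi_p(w^{c_D k p^{j-1}}) \equiv 0 \pmod{N}$, where $\Phi_p$ is the $p$-th cyclotomic polynomial, and (ii) $2j \ge \log_p(c_D k) + \ell$. Then $N$ is prime.
   Context: For an integer $n \ge 2$ and a square-free integer $D$: if $D \equiv 2,3 \pmod 4$, let $\mathcal{I}_n(D) = \{a + b\sqrt{D} : a,b \in \mathbb{Z}/n\mathbb{Z}\}$ (the ring $\mathbb{Z}[\sqrt D]/n\mathbb{Z}[\sqrt D]$) and $\mathcal{G}_n(D) = \{a + b\sqrt{D} \in \mathcal{I}_n(D) : a^2 - Db^2 \equiv 1 \pmod n\}$; if $D \equiv 1 \pmod 4$, let $\omega = \frac{1+\sqrt D}{2}$, $\mathcal{I}_n(D) = \{a + b\omega : a,b \in \mathbb{Z}/n\mathbb{Z}\}$ (the ring $\mathbb{Z}[\omega]/n\mathbb{Z}[\omega]$) and $\mathcal{G}_n(D) = \{a + b\omega \in \mathcal{I}_n(D) : a^2 + ab + \frac{1-D}{4} b^2 \equiv 1 \pmod n\}$. Powers are computed in $\mathcal{I}_n(D)$, a congruence $x \equiv y \pmod n$ for $x,y \in \mathcal{I}_n(D)$ means equality in $\mathcal{I}_n(D)$,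 and polynomials are evaluated in $\mathcal{I}_n(D)$. *)

(* Defs.v *)
From mathcomp Require Import all_boot all_order all_algebra.
From mathcomp Require Import cyclotomic.
From Stdlib Require Rdefinitions Raxioms Rpower.
Set Implicit Arguments. Unset Strict Implicit. Unset Printing Implicit Defensive.
Import GRing.Theory Num.Theory.
Local Open Scope ring_scope.

(* Elements a + b*sqrt(D)  (D = 2,3 mod 4)  or  a + b*omega  (D = 1 mod 4),
   omega = (1+sqrt D)/2, represented by integer coordinates (a, b).
   Arithmetic is done exactly in Z[sqrt D] resp. Z[omega]; congruence mod n
   (coordinatewise) then realises equality in I_n(D) = Z[.]/nZ[.]. *)
Definition quadT := (int * int)%type.

Definition is1mod4 (D : int) : bool := (D %% 4)%Z == 1.

Definition qadd (x y : quadT) : quadT := (x.1 + y.1, x.2 + y.2).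
Definition qscale (c : int) (x : quadT) : quadT := (c * x.1, c * x.2).

(* (a+b s)(c+d s): s = sqrt D gives s^2 = D; s = omega gives omega^2 = omega + (D-1)/4 *)
Definition qmul (D : int) (x y : quadT) : quadT :=
  if is1mod4 D then
    (x.1 * y.1 + x.2 * y.2 * ((D - 1) %/ 4)%Z,
     x.1 * y.2 + x.2 * y.1 + x.2 * y.2)
  else
    (x.1 * y.1 + D * x.2 * y.2, x.1 * y.2 + x.2 * y.1).

Definition qone : quadT := (1, 0).
Definition qzero : quadT := (0, 0).

Definition qpow (D : int) (x : quadT) (e : nat) : quadT := iter e (qmul D x) qone.

Definition qeval (D : int) (P : {poly int}) (x : quadT) : quadT :=
  \big[qadd/qzero]_(i < size P) qscale P`_i (qpow D x i).

Definition qcong (n : nat) (x y : quadT) : Prop :=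
  (x.1 = y.1 %[mod n%:Z])%Z /\ (x.2 = y.2 %[mod n%:Z])%Z.

Definition qnorm (D : int) (x : quadT) : int :=
  if is1mod4 D then x.1 ^+ 2 + x.1 * x.2 + ((1 - D) %/ 4)%Z * x.2 ^+ 2
  else x.1 ^+ 2 - D * x.2 ^+ 2.

Definition inG (n : nat) (D : int) (x : quadT) : Prop :=
  (qnorm D x = 1 %[mod n%:Z])%Z.

Definition squarefree_int (D : int) : Prop :=
  D != 0 /\ forall m : nat, (1 < m)%N -> ~ (m%:Z ^+ 2 %| D)%Z.

Definition legendre (a : int) (q : nat) : int :=
  if (q%:Z %| a)%Z then 0
  else if [exists x : 'I_q, (q%:Z %| (x%:Z) ^+ 2 - a)%Z] then 1 else -1.

Definition jacobi (a : int) (n : nat) : int :=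
  \prod_(q <- primes n) legendre a q ^+ logn q n.

Definition log_cond (m p l r : nat) : Prop :=
  Rdefinitions.Rle
    (Rdefinitions.Rplus
       (Rdefinitions.Rdiv (Rpower.ln (Raxioms.INR m)) (Rpower.ln (Raxioms.INR p)))
       (Raxioms.INR l))
    (Raxioms.INR r).

(* Main.v *)
Require Import Defs.
From Stdlib Require Import Reals Lra.
From HB Require Import structures.
From mathcomp Require Import all_boot all_order all_algebra all_field.
From mathcomp Require Import cyclotomic.
Set Implicit Arguments. Unset Strict Implicit. Unset Printing Implicit Defensive.
Import GRing.Theory Num.Theory.
From mathcomp Require Import ring zify.
Local Open Scope ring_scope.

Section QR.
Variable (R : comNzRingType).
Definition qrT (t n : R) : Type := (R * R)%type.
Variables (t n : R).
Local Notation qr := (qrT t n).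
HB.instance Definition _ := GRing.Zmodule.copy qr (R * R)%type.
Definition qrone : qr := (1, 0).
Definition qrmul (x y : qr) : qr :=
  (x.1 * y.1 + n * x.2 * y.2, x.1 * y.2 + x.2 * y.1 + t * x.2 * y.2).
Fact qrmulA : associative qrmul.
Proof. move=> [a b] [c d] [e f]; rewrite /qrmul /=; congr pair; ring. Qed.
Fact qrmulC : commutative qrmul.
Proof. move=> [a b] [c d]; rewrite /qrmul /=; congr pair; ring. Qed.
Fact qrmul1 : left_id qrone qrmul.
Proof. move=> [a b]; rewrite /qrmul /=; congr pair; ring. Qed.
Lemma qraddE (x y : qr) : x + y = (x.1 + y.1, x.2 + y.2). Proof. by []. Qed.
Fact qrmulDl : left_distributive qrmul +%R.
Proof. move=> [a b] [c d] [e f]; rewrite /qrmul !qraddE /=; congr pair; ring. Qed.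
Fact qrone0 : qrone != 0.
Proof. apply/eqP => -[] /eqP; rewrite oner_eq0. done. Qed.
HB.instance Definition _ := GRing.Zmodule_isComNzRing.Build qr qrmulA qrmulC qrmul1 qrmulDl qrone0.

Lemma qrE (x y : qr) : x * y = (x.1 * y.1 + n * x.2 * y.2, x.1 * y.2 + x.2 * y.1 + t * x.2 * y.2).
Proof. by []. Qed.
Lemma qr1E : (1 : qr) = (1, 0). Proof. by []. Qed.
Lemma qroppE (x : qr) : - x = (- x.1, - x.2). Proof. by []. Qed.
Lemma qr0E : (0 : qr) = (0, 0). Proof. by []. Qed.
End QR.

Section Key.
Variables (F : finFieldType) (q : nat) (t n : F).
Hypothesis (qP : prime q) (qodd : odd q) (cardF : #|F| = q) (pchF : q \in [pchar F]).
Hypothesis (two0 : (2 : F) != 0).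
Local Notation Q := (qrT t n).

Definition sc (c : F) : Q := (c, 0).
Lemma scD a b : sc (a + b) = sc a + sc b. Proof. by rewrite /sc qraddE /= addr0. Qed.
Lemma scM a b : sc (a * b) = sc a * sc b.
Proof. by rewrite /sc qrE /=; congr pair; ring. Qed.
Lemma sc1 : sc 1 = 1. Proof. by []. Qed.
Lemma sc0 : sc 0 = 0. Proof. by []. Qed.
Lemma scX a k : sc (a ^+ k) = sc a ^+ k.
Proof. elim: k => [|k IH]; first by rewrite !expr0. by rewrite !exprS scM IH. Qed.
Lemma scN k : sc k%:R = k%:R.
Proof. elim: k => [|k IH]; first by []. by rewrite -addn1 !natrD scD IH. Qed.

Lemma pchQ : q \in [pchar Q].
Proof.
apply/andP; split => //; rewrite -scN; move: pchF => /andP[_ /eqP ->]; done.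
Qed.

Lemma frobQ (x y : Q) : (x + y) ^+ q = x ^+ q + y ^+ q.
Proof. by rewrite -!(pFrobenius_autE pchQ) rmorphD. Qed.

Lemma expqF (a : F) : a ^+ q = a.
Proof. by rewrite -cardF expf_card. Qed.

Definition th : Q := (0, 1).
Definition hh : F := t / 2.
Definition ss : Q := th - sc hh.
Definition dd : F := n + hh * hh.
Lemma ss2 : ss * ss = sc dd.
Proof.
rewrite /ss /th /sc /dd qrE qraddE qroppE /=.
have e : hh * 2 = t by rewrite /hh divfK.
congr pair; [ring | rewrite -e; ring].
Qed.
Definition ff (a b : F) : Q := sc a + sc b * ss.
Definition cc : F := dd ^+ q./2.
Lemma ssq : ss ^+ q = sc cc * ss.
Proof.
rewrite -{1}(odd_double_half q) qodd add1n exprS -muln2 mulnC exprM expr2 ss2 -scX mulrC.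
by [].
Qed.
Lemma ffq a b : ff a b ^+ q = ff a (b * cc).
Proof.
by rewrite /ff frobQ exprMn -!scX !expqF ssq scM mulrA.
Qed.
Lemma cc3 : cc * cc * cc = cc.
Proof.
have q2 : (0 < q./2)%N.
  have := prime_gt1 qP; rewrite -{1}(odd_double_half q) qodd; case: (q./2) => //.
rewrite /cc; have [->|d0] := eqVneq dd 0; first by rewrite expr0n eqn0Ngt q2 /= !mulr0.
have e : dd ^+ q./2 * dd ^+ q./2 = 1.
  rewrite -exprD addnn.
  have : dd ^+ q = dd * 1 by rewrite mulr1; apply: expqF.
  rewrite -{1}(odd_double_half q) qodd add1n exprS.
  by apply: mulfI.
by rewrite e mul1r.
Qed.
Lemma ffz (z : Q) : z = ff (z.1 + z.2 * hh) z.2.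
Proof.
case: z => a b; rewrite /ff /ss /th /sc qraddE qrE qraddE qroppE /=.
congr pair; ring.
Qed.
Lemma keyQ (z : Q) : z ^+ (q ^ 3) = z ^+ q.
Proof.
rewrite (ffz z) !expnS expn0 muln1 !exprM !ffq.
by rewrite -!mulrA [cc * (cc * cc)]mulrA cc3.
Qed.
Definition cj (z : Q) : Q := (z.1 + t * z.2, - z.2).
Lemma cjE (z : Q) : z * cj z = sc (z.1 ^+ 2 + t * z.1 * z.2 - n * z.2 ^+ 2).
Proof. case: z => a b; rewrite /cj /sc qrE /=; congr pair; ring. Qed.
Lemma unitQ (z y : Q) : z * y = 1 -> z ^+ (q ^ 3 - q) = 1.
Proof.
move=> zy.
have le : (q <= q ^ 3)%N by rewrite -{1}(expn1 q) leq_pexp2l ?prime_gt0.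
have : z ^+ (q ^ 3 - q) * (z * y) ^+ q = 1.
  by rewrite exprMn mulrA -exprD subnK // keyQ -exprMn zy expr1n.
by rewrite zy expr1n mulr1.
Qed.
End Key.

Lemma exp_gcd (R : pzRingType) (x : R) a b : (0 < a)%N -> x ^+ a = 1 -> x ^+ b = 1 ->
  x ^+ (gcdn a b) = 1.
Proof.
move=> a0 xa xb; have [c _ /dvdnP[k e]] := Bezoutl b a0.
have : x ^+ (gcdn a b + c * b) = 1 by rewrite e mulnC exprM xa expr1n.
by rewrite exprD mulnC exprM xb expr1n mulr1.
Qed.

Lemma Phi_prime_sum p : prime p -> 'Phi_p = \sum_(i < p) 'X^i.
Proof.
move=> pp.
have h1 : 'Phi_1 = 'X - 1.
  by have := prod_Cyclotomic (isT : (0 < 1)%N); rewrite big_seq1 expr1.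
have hp : perm_eq (divisors p) [:: 1%N; p].
  apply: uniq_perm; first exact: divisors_uniq.
    by rewrite /= inE andbT neq_ltn prime_gt1.
  move=> d; rewrite -dvdn_divisors ?prime_gt0 // !inE.
  case/primeP: (pp) => _ hd.
  apply/idP/orP => [/hd/orP //| [/eqP->|/eqP->]]; by rewrite ?dvd1n ?dvdnn.
have := prod_Cyclotomic (prime_gt0 pp); rewrite (perm_big _ hp) big_cons big_seq1 h1.
rewrite subrX1 => /mulfI; apply.
by rewrite -polyC1 polyXsubC_eq0.
Qed.

Section Prime.
Variables (D : int) (q : nat).
Hypothesis qP : prime q.
Local Notation F := ('F_q).
Definition tI : int := if is1mod4 D then 1 else 0.
Definition nI : int := if is1mod4 D then ((D - 1) %/ 4)%Z else D.
Local Notation Q := (qrT (tI%:~R : F) (nI%:~R : F)).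
Definition psi (x : quadT) : Q := ((x.1)%:~R, (x.2)%:~R).

Lemma qmulE x y : qmul D x y = (x.1 * y.1 + nI * x.2 * y.2, x.1 * y.2 + x.2 * y.1 + tI * x.2 * y.2).
Proof. rewrite /qmul /tI /nI; case: ifP => _; congr pair; ring. Qed.

Lemma psiM x y : psi (qmul D x y) = psi x * psi y.
Proof. by rewrite qmulE /psi qrE /=; congr pair; rewrite !(intrD, intrM). Qed.

Lemma psi1 : psi qone = 1.
Proof. by rewrite /psi qr1E /= mulr1z mulr0z. Qed.

Lemma psiX x k : psi (qpow D x k) = psi x ^+ k.
Proof.
elim: k => [|k IH]; first by rewrite expr0 /qpow /= psi1.
by rewrite exprS /qpow iterS -/(qpow D x k) psiM IH.
Qed.

Lemma scNeg (a : F) : sc (tI%:~R) (nI%:~R) (- a) = - sc _ _ a.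
Proof. by rewrite /sc qroppE /= oppr0. Qed.

Lemma intrQ (c : int) : (c%:~R : Q) = sc _ _ (c%:~R : F).
Proof.
elim/int_rec: c => [|m IH|m IH]; first by rewrite !mulr0z sc0.
  by rewrite intS !intrD !mulr1z scD IH sc1.
by rewrite intS opprD !intrD scD -IH !intrN !mulr1z scNeg sc1.
Qed.

Lemma psiS c x : psi (qscale c x) = c%:~R * psi x.
Proof. by rewrite intrQ /psi /qscale /sc qrE /=; congr pair; rewrite intrM; ring. Qed.

Lemma psiA x y : psi (qadd x y) = psi x + psi y.
Proof. by rewrite /psi qraddE /= !intrD. Qed.

Lemma psi0 : psi qzero = 0.
Proof. by rewrite /psi qr0E /= mulr0z. Qed.

Lemma psi_qeval P x : P \is monic ->
  psi (qeval D P x) = (map_poly (intr : int -> Q) P).[psi x].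
Proof.
move=> mon.
rewrite /qeval (big_morph psi psiA psi0).
rewrite horner_coef size_map_poly_id0; last by rewrite (monicP mon) rmorph1 oner_neq0.
by apply: eq_bigr => i _; rewrite psiS psiX coef_map.
Qed.

Lemma congF N (a b : int) : (q %| N)%N -> (a = b %[mod N%:Z])%Z -> (a%:~R : F) = b%:~R.
Proof.
move=> qN /eqP h; apply/eqP; rewrite -subr_eq0 -intrB -(dvdz_pcharf (pchar_Fp qP)).
apply: dvdz_trans (_ : (N%:Z %| _)%Z); first by rewrite dvdzE.
by rewrite -eqz_mod_dvd.
Qed.

Lemma qcong_psi N x y : (q %| N)%N -> qcong N x y -> psi x = psi y.
Proof. by move=> qN [h1 h2]; rewrite /psi (congF qN h1) (congF qN h2). Qed.

Lemma norm_psi w : qnorm D w = w.1 ^+ 2 + tI * w.1 * w.2 - nI * w.2 ^+ 2.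
Proof.
rewrite /qnorm /tI /nI; case: ifP => h; last by ring.
set k := (D %/ 4)%Z.
have e : D = k * 4 + 1 by rewrite {1}(divz_eq D 4) (eqP h).
have e1 : ((1 - D) %/ 4)%Z = - k by rewrite [in LHS]e (_ : 1 - (k * 4 + 1) = (- k) * 4); [rewrite mulzK | ring].
have e2 : ((D - 1) %/ 4)%Z = k by rewrite [in LHS]e (_ : (k * 4 + 1) - 1 = k * 4); [rewrite mulzK | ring].
rewrite e1 e2; ring.
Qed.
End Prime.

Lemma prime_div_cong D q p k l cD j w :
  prime q -> prime p -> odd p -> (0 < k)%N -> (0 < cD)%N -> (1 <= j <= l)%N ->
  let N := (cD * k * p ^ l).-1 in
  odd N -> inG N D w ->
  qcong N (qeval D 'Phi_p (qpow D w (cD * k * p ^ j.-1))) qzero ->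
  (q %| N)%N -> (p ^ j %| q.-1)%N || (p ^ j %| q.+1)%N.
Proof.
move=> qP pP podd k0 c0 /andP[j1 jl] N Nodd hw hphi qN.
have qodd : odd q := dvdn_odd qN Nodd.
have l0 : (0 < l)%N by apply: leq_trans jl.
have pN : ~~ (p %| N)%N.
  apply/negP => pN.
  have NS : N.+1 = (cD * k * p ^ l)%N by rewrite /N prednK // !muln_gt0 c0 k0 expn_gt0 prime_gt0.
  have : (p %| N.+1)%N by rewrite NS dvdn_mull // dvdn_exp.
  rewrite -addn1 dvdn_addr // dvdn1 => /eqP p1.
  by have := prime_gt1 pP; rewrite p1.
have pq : p != q by apply: contraNneq pN => ->.
have pch := pchar_Fp qP.
have card := card_Fp qP.
have two0 : (2 : 'F_q) != 0.
  apply/negP; rewrite -(dvdn_pcharf pch) (dvdn_prime2 qP (isT : prime 2)) => /eqP q2.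
  by rewrite q2 in qodd.
set z := psi D q w.
have zy : z * cj z = 1.
  have hn : ((qnorm D w)%:~R : 'F_q) = 1 by rewrite (congF qP qN hw) mulr1z.
  rewrite norm_psi !expr2 !(intrD, intrN, intrM) in hn.
  by rewrite cjE /= !expr2 hn sc1.
have zM : z ^+ (q ^ 3 - q) = 1 := unitQ qP qodd card pch two0 zy.
set e := (cD * k * p ^ j.-1)%N.
have hu : psi D q (qeval D 'Phi_p (qpow D w e)) = 0.
  by rewrite (qcong_psi _ qP qN hphi) psi0.
have S : \sum_(i < p) (z ^+ e) ^+ i = 0.
  move: hu; rewrite psi_qeval ?Cyclotomic_monic // psiX Phi_prime_sum // rmorph_sum horner_sum.
  by under eq_bigr do rewrite /= map_polyXn hornerXn.
have up : (z ^+ e) ^+ p = 1 by apply/eqP; rewrite -subr_eq0 subrX1 S mulr0.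
have zep : z ^+ (e * p) = 1 by rewrite exprM.
have q1 := prime_gt1 qP.
have M0 : (0 < q ^ 3 - q)%N by rewrite subn_gt0 !expnS expn0 muln1; nia.
have zg := exp_gcd M0 zM zep.
have pjM : (p ^ j %| q ^ 3 - q)%N.
  apply/negP => npj.
  set g := gcdn (q ^ 3 - q) (e * p).
  have gM : (g %| q ^ 3 - q)%N := dvdn_gcdl _ _.
  have ge : (g %| cD * k * p ^ j)%N.
    have -> : (cD * k * p ^ j = e * p)%N by rewrite /e -[(_ * p ^ j.-1 * p)%N]mulnA -expnSr prednK.
    exact: dvdn_gcdr.
  have /(dvdn_pfactor _ _ pP)[i il gi] := dvdn_gcdr g (p ^ j).
  have ij : (i < j)%N.
    rewrite ltn_neqAle il andbT; apply/eqP => ij; subst i.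
    by move: npj; rewrite -gi (dvdn_trans (dvdn_gcdl _ _) gM).
  have : (g %| cD * k * p ^ j.-1)%N.
    apply: (@dvdn_trans (gcdn (cD * k * g) (cD * k * p ^ j))).
      by rewrite dvdn_gcd dvdn_mull ?dvdnn.
    rewrite -muln_gcdr gi dvdn_mul ?dvdnn // dvdn_exp2l //.
    by rewrite -ltnS prednK.
  case/dvdnP => m em.
  have ue : z ^+ e = 1 by rewrite /e em mulnC exprM zg expr1n.
  have : (p%:R : qrT ((tI D)%:~R : 'F_q) ((nI D)%:~R : 'F_q)) = 0.
    move: S; rewrite ue; under eq_bigr do rewrite expr1n.
    by rewrite sumr_const card_ord.
  rewrite -(scN (tI D)%:~R (nI D)%:~R) => /(congr1 fst) /eqP.
  rewrite -(dvdn_pcharf pch) (dvdn_prime2 qP pP) eq_sym => /eqP pq'.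
  by rewrite pq' eqxx in pq.
have E : (q ^ 3 - q = q * (q.-1 * q.+1))%N.
  by rewrite -subn1 -(addn1 q) -subn_sqr exp1n mulnBr muln1 -expnS.
have cpq : coprime p q by rewrite prime_coprime // dvdn_prime2 //.
move: pjM; rewrite E Gauss_dvdr; last by rewrite coprimeXl.
have [pq1|npq1] := boolP (p %| q.+1)%N.
  have npq2 : ~~ (p %| q.-1)%N.
    apply/negP => pq2.
    have : (p %| q.-1 + 2)%N by rewrite -subn1 addn2 -subSn ?subn1 //; apply: ltnW.
    rewrite dvdn_addr // (dvdn_prime2 pP (isT : prime 2)) => /eqP p2.
    by rewrite p2 in podd.
  rewrite Gauss_dvdr; last by apply: coprimeXl; rewrite prime_coprime.
  by move=> ->; rewrite orbT.
rewrite Gauss_dvdl; last by apply: coprimeXl; rewrite prime_coprime.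
by move=> ->.
Qed.

Section LogB.
Local Open Scope R_scope.
Lemma INR_expn (p n : nat) : INR (p ^ n)%N = INR p ^ n.
Proof. elim: n => [|n IH]; first by rewrite expn0. by rewrite expnS -multE mult_INR IH. Qed.

Lemma log_bound (m p l r : nat) : (0 < m)%N -> (1 < p)%N -> log_cond m p l r -> (m * p ^ l <= p ^ r)%N.
Proof.
rewrite /log_cond => m0 p1 H.
case: (leqP (m * p ^ l) (p ^ r)) => // hlt; exfalso.
have hR : INR (p ^ r) < INR (m * p ^ l) by apply: lt_INR; apply/ltP.
rewrite INR_expn -multE mult_INR INR_expn in hR.
have pgt1 : 1 < INR p by have := lt_INR 1 p (ltP p1); rewrite /=.
have ppos : 0 < INR p by lra.
have mpos : 0 < INR m by apply: lt_0_INR; apply/ltP.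
have Lpos : 0 < ln (INR p) by rewrite -ln_1; apply: ln_increasing; lra.
have hR2 := ln_increasing _ _ (pow_lt _ r ppos) hR.
rewrite ln_mult ?ln_pow // in hR2; last by apply: pow_lt.
set L := ln (INR p) in Lpos H hR2.
set X := ln (INR m) in H hR2.
have e : X / L * L = X by rewrite /Rdiv Rmult_assoc Rinv_l ?Rmult_1_r //; apply: Rgt_not_eq.
have := Rmult_le_compat_r L _ _ (Rlt_le _ _ Lpos) H.
rewrite Rmult_plus_distr_r e; lra.
Qed.
End LogB.

Local Open Scope ring_scope.

Definition goodP (P : int) (d : int) := (d == 1 %[mod P])%Z || (d == -1 %[mod P])%Z.

Lemma modM (P a b s t : int) : (a == s %[mod P])%Z -> (b == t %[mod P])%Z -> (a * b == s * t %[mod P])%Z.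
Proof.
move=> /eqP ha /eqP hb; apply/eqP.
by rewrite -modzMml ha modzMml -modzMmr hb modzMmr.
Qed.

Lemma goodM P a b : goodP P a -> goodP P b -> goodP P (a * b).
Proof.
rewrite /goodP => /orP[] ha /orP[] hb; apply/orP.
- by left; have := modM ha hb; rewrite mulr1.
- by right; have := modM ha hb; rewrite mul1r.
- by right; have := modM ha hb; rewrite mulr1.
- by left; have := modM ha hb; rewrite mulrNN mulr1.
Qed.

Lemma all_div_good N P : (0 < N)%N -> (forall q, prime q -> (q %| N)%N -> goodP P q) ->
  forall d, (d %| N)%N -> goodP P d.
Proof.
move=> N0 H; elim/ltn_ind => d IH dN.
case: (ltngtP d 1) => [d0|d1|->]; last by rewrite /goodP eqxx.
  have d00 : d = 0%N by lia.
  by move: dN; rewrite d00 dvd0n => /eqP N00; rewrite N00 in N0.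
have rP := pdiv_prime d1; have rd := pdiv_dvd d.
have e : d = (d %/ pdiv d * pdiv d)%N by rewrite divnK.
rewrite e PoszM goodM //.
  apply: IH; first exact: ltn_Pdiv (prime_gt1 rP) (ltnW d1).
  by apply: dvdn_trans dN; rewrite {3}e dvdn_mulr.
by apply: H => //; apply: dvdn_trans dN.
Qed.

Lemma final_ineq (x y N P : nat) : odd x -> odd P -> (1 < x)%N -> (1 < y)%N -> N = (x * y)%N ->
  (N.+1 <= P * P)%N -> (3 <= P)%N -> (P%:Z %| x%:Z - 1)%Z -> (P%:Z %| y%:Z + 1)%Z -> False.
Proof.
move=> xo Po x1 y1 Nxy NP P3 /dvdzP[a ea] /dvdzP[b eb].
have ex := odd_double_half x; have eP := odd_double_half P.
rewrite xo in ex; rewrite Po in eP.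
have a1 : (1 <= a)%R by nia.
have a2 : (2 <= a)%R by nia.
have b1 : (1 <= b)%R by nia.
have hx : (2 * P%:Z + 1 <= x%:Z)%R by nia.
have hy : (P%:Z - 1 <= y%:Z)%R by nia.
nia.
Qed.

Theorem theorem1p2 (D : int) (p k l cD : nat) (w : quadT) :
  squarefree_int D ->
  prime p -> odd p ->
  (0 < k)%N -> (0 < l)%N -> (0 < cD)%N ->
  coprime (cD * k) p ->
  let N := (cD * k * p ^ l).-1 in
  odd N ->
  jacobi D N = -1 ->
  inG N D w ->
  (exists j : nat,
      [/\ (1 <= j <= l)%N,
          qcong N (qeval D 'Phi_p (qpow D w (cD * k * p ^ j.-1))) qzero
        & log_cond (cD * k) p l (2 * j)]) ->
  prime N.
Proof.
move=> _ pP podd k0 l0 c0 _ N Nodd _ hw [j [jj hphi hlog]].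
have /andP[j1 jl] := jj.
set P := (p ^ j)%N.
have p3 : (3 <= p)%N.
  have := prime_gt1 pP; have : p != 2%N by apply/eqP => e; rewrite e in podd.
  lia.
have pP1 : (p <= P)%N.
  by rewrite /P -{1}(expn1 p) leq_exp2l ?prime_gt1.
have P3 : (3 <= P)%N by apply: leq_trans pP1.
have Ppos : (0 < cD * k * p ^ l)%N by rewrite !muln_gt0 c0 k0 expn_gt0 prime_gt0.
have NS : N.+1 = (cD * k * p ^ l)%N by rewrite /N prednK.
have hb0 : (0 < cD * k)%N by rewrite muln_gt0 c0 k0.
have hb := log_bound hb0 (prime_gt1 pP) hlog.
have NP : (N.+1 <= P * P)%N.
  by rewrite NS /P -expnD addnn -mul2n.
have N1 : (1 < N)%N.
  have : (p <= N.+1)%N.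
    rewrite NS; apply: leq_trans (_ : p ^ l <= _)%N.
      by rewrite -{1}(expn1 p) leq_exp2l ?prime_gt1.
    by rewrite leq_pmull // muln_gt0 c0 k0.
  lia.
have Hq : forall q, prime q -> (q %| N)%N -> goodP P q.
  move=> q qP qN.
  have := prime_div_cong qP pP podd k0 c0 jj Nodd hw hphi qN.
  case/orP => h; apply/orP; [left | right].
    by rewrite eqz_mod_dvd subzn ?prime_gt0 // subn1 dvdzE.
  by rewrite eqz_mod_dvd opprK addrC -intS dvdzE.
have HN : (N%:Z == -1 %[mod P%:Z])%Z.
  rewrite eqz_mod_dvd opprK addrC -intS dvdzE /= NS dvdn_mull // dvdn_exp2l //.
case: (boolP (prime N)) => // Nnp; exfalso.
have xP := pdiv_prime N1; have xN := pdiv_dvd N.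
set x := pdiv N in xP xN.
set y := (N %/ x)%N.
have Nxy : N = (x * y)%N by rewrite mulnC divnK.
have y1 : (1 < y)%N.
  case: (ltngtP y 1) => // [y0|y1']; last by rewrite Nxy y1' muln1 in Nnp; rewrite xP in Nnp.
  have : y = 0%N by lia.
  by move=> y00; rewrite Nxy y00 muln0 in N1.
have x1 := prime_gt1 xP.
have xo : odd x by apply: dvdn_odd xN Nodd.
have yo : odd y by apply: (@dvdn_odd _ N) => //; rewrite Nxy dvdn_mull.
have Po : odd P by rewrite /P oddX podd orbT.
have gx := Hq x xP xN.
have gy : goodP P y by apply: (all_div_good (ltnW N1) Hq); rewrite Nxy dvdn_mull.
have contra1 : (N%:Z == 1 %[mod P%:Z])%Z -> False.
  move=> /eqP h1; move/eqP: HN; rewrite h1 => /eqP.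
  rewrite eqz_mod_dvd opprK dvdzE /= => /(dvdn_leq (isT : (0 < 1 + 1)%N)); lia.
have gxy := modM (P := P%:Z) (a := x%:Z) (b := y%:Z).
rewrite -PoszM -Nxy in gxy.
case/orP: gx => hx; case/orP: gy => hy.
- by apply: contra1; have := gxy _ _ hx hy; rewrite mulr1.
- apply: (final_ineq xo Po x1 y1 Nxy NP P3); first by rewrite -eqz_mod_dvd.
  by move: hy; rewrite eqz_mod_dvd opprK.
- apply: (final_ineq yo Po y1 x1 (etrans Nxy (mulnC _ _)) NP P3); first by rewrite -eqz_mod_dvd.
  by move: hx; rewrite eqz_mod_dvd opprK.
- by apply: contra1; have := gxy _ _ hx hy; rewrite mulrNN mulr1.
Qed.
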